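(* Let $D' \in \mathrm{Sym}_n(\mathbb{R}_{\geq 0})$ be a corrupted distance matrix. Then the Increase Only Metric Repair algorithm described below returns a perturbation $P$ with $0\preceq P$ such that $D'+P$ is metric, and it runs in time $O(n^3)$.
   Context: $\mathrm{Sym}_n(\mathbb{R}_{\geq 0})$ denotes the symmetric $n\times n$ matrices with nonnegative entries. $D$ is metric if $D_{ii}=0$ for all $i$ and $D_{ij}\le D_{ik}+D_{jk}$ for all $i,j,k$. $A\preceq B$ means entrywise $\le$. The Increase Only Metric Repair algorithm: set $\widehat{D}=D'$ (a symmetric matrix, updates being made symmetrically). For $k=1,\dots,n$, for $i=1,\dots,n$, for $j=1,\dots,i-1$: if $\widehat{D}_{ij} > \widehat{D}_{ik}+\widehat{D}_{kj}$, set $\widehat{D}_{ik}=\widehat{D}_{ki}=\widehat{D}_{ij}-\widehat{D}_{kj}$. Output $P=\widehat{D}-D'$. *)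

(* Defs.v *)
From mathcomp Require Import all_boot all_order all_algebra.
Set Implicit Arguments. Unset Strict Implicit. Unset Printing Implicit Defensive.
Import Order.TTheory GRing.Theory Num.Theory.
Local Open Scope ring_scope.

Section IOMR.
Variables (R : realFieldType) (n : nat).

Definition sym_nonneg (D : 'M[R]_n) : Prop :=
  (forall i j, D i j = D j i) /\ (forall i j, 0 <= D i j).

Definition is_metric (D : 'M[R]_n) : Prop :=
  (forall i, D i i = 0) /\ (forall i j k, D i j <= D i k + D j k).

Definition mx_le (A B : 'M[R]_n) : Prop := forall i j, A i j <= B i j.

Definition sym_set (D : 'M[R]_n) (i k : 'I_n) (v : R) : 'M[R]_n :=
  \matrix_(a, b) (if ((a == i) && (b == k)) || ((a == k) && (b == i))
                  then v else D a b).

Definition iomr_step (k i j : 'I_n) (D : 'M[R]_n) : 'M[R]_n :=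
  if D i k + D k j < D i j then sym_set D i k (D i j - D k j) else D.

(* The state carries the current matrix and a counter of elementary
   (constant-time) inner-loop iterations performed, as a cost model. *)
Definition iomr_state := ('M[R]_n * nat)%type.

Definition iomr_tick (k i j : 'I_n) (s : iomr_state) : iomr_state :=
  (iomr_step k i j s.1, s.2.+1).

Definition iomr_run (D' : 'M[R]_n) : iomr_state :=
  foldl (fun (s : iomr_state) (k : 'I_n) =>
    foldl (fun (s : iomr_state) (i : 'I_n) =>
      foldl (fun (s : iomr_state) (j : 'I_n) => iomr_tick k i j s) s
        [seq j <- enum 'I_n | (nat_of_ord j < nat_of_ord i)%N])
      s (enum 'I_n))
    (D', 0%N) (enum 'I_n).

Definition iomr (D' : 'M[R]_n) : 'M[R]_n := (iomr_run D').1 - D'.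

Definition iomr_cost (D' : 'M[R]_n) : nat := (iomr_run D').2.

End IOMR.

(* Main.v *)
Require Import Defs.
From mathcomp Require Import all_boot all_order all_algebra.
From mathcomp Require Import lra.
Set Implicit Arguments. Unset Strict Implicit. Unset Printing Implicit Defensive.
Import Order.TTheory GRing.Theory Num.Theory.
Local Open Scope ring_scope.

Lemma foldl_ind (S T : Type) (f : S -> T -> S) (P : seq T -> S -> Prop)
  (l : seq T) (s0 : S) : P [::] s0 ->
  (forall p x q s, p ++ x :: q = l -> P p s -> P (rcons p x) (f s x)) ->
  P l (foldl f s0 l).
Proof.
move=> H0 Hs.
suff H : forall l' p s, p ++ l' = l -> P p s -> P l (foldl f s l').
  exact: (H l [::] s0 erefl H0).
elim=> [|x l' IH] p s E Hp /=.
  by rewrite cats0 in E; rewrite -E.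
apply: (IH (rcons p x)); first by rewrite cat_rcons.
exact: Hs E Hp.
Qed.

Lemma enum_prefix_lt n (p q : seq 'I_n) r i :
  p ++ r :: q = enum 'I_n -> i \in p -> (i < r)%N.
Proof.
move=> E ip.
have : sorted ltn (map val (enum 'I_n)) by rewrite val_enum_ord iota_ltn_sorted.
rewrite -E map_cat /= sorted_pairwise; last exact: ltn_trans.
rewrite pairwise_cat => /andP[/allrelP H _].
apply: H; first by apply: map_f.
by rewrite in_cons eqxx.
Qed.

Section Proof.
Variables (R : realFieldType) (n : nat).

Definition tri (M : 'M[R]_n) (m : 'I_n) := forall i j, M i j <= M i m + M m j.
Definition symz (M : 'M[R]_n) :=
  [/\ forall a b, M a b = M b a, forall a, M a a = 0 & forall a b, 0 <= M a b].

Record Inv (k : 'I_n) (D M : 'M[R]_n) (st : pred 'I_n)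
   (dn : 'I_n -> 'I_n -> bool) : Prop := MkInv {
  inv1 : forall a b, M a b = M b a;
  inv2 : forall a, M a a = 0;
  inv3 : forall a b, D a b <= M a b;
  inv4 : forall a b, a != k -> b != k -> M a b = D a b;
  inv5 : forall i, M i k = D i k \/ (st i /\ exists j : 'I_n,
          [/\ (j < i)%N, j != k, i != k & M i k + M j k <= M i j]);
  inv6 : forall i j, dn i j -> M i j <= M i k + M j k }.

Lemma Inv_weak k D M (st st' : pred 'I_n) (dn dn' : 'I_n -> 'I_n -> bool) : Inv k D M st dn ->
  (forall a, st a -> st' a) -> (forall a b, dn' a b -> dn a b) ->
  Inv k D M st' dn'.
Proof.
case=> H1 H2 H3 H4 HW HA Hst Hdn; split=> //.
  move=> i; case: (HW i) => [->|[si ex]]; first by left.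
  by right; split=> //; apply: Hst.
by move=> i j /Hdn /HA.
Qed.

Lemma step_inv k D M (st : pred 'I_n) (dn : 'I_n -> 'I_n -> bool) (r j : 'I_n) :
  Inv k D M st dn -> st r -> (forall i, st i -> i != r -> (i < r)%N) ->
  (j < r)%N ->
  Inv k D (iomr_step k r j M) st (fun a b => dn a b || ((a == r) && (b == j))).
Proof.
case=> Hs Hd HD Hoff HW HA Hr Hord Hjr.
have Hjr' : j != r by apply/eqP => E; rewrite E ltnn in Hjr.
rewrite /iomr_step; case: ifP => Hc; last first.
  split=> //; move=> a b /orP [/HA // | /andP [/eqP -> /eqP ->]].
  by rewrite (Hs j k) leNgt Hc.
have rk : r != k.
  by apply/eqP => E; move: Hc; rewrite E Hd add0r ltxx.
have jk : j != k.
  by apply/eqP => E; move: Hc; rewrite E Hd addr0 ltxx.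
have kr : (k == r) = false by rewrite eq_sym (negbTE rk).
set v := M r j - M k j.
have Nk : forall a b, sym_set M r k v a b =
  if ((a == r) && (b == k)) || ((a == k) && (b == r)) then v else M a b.
  by move=> a b; rewrite /sym_set mxE.
have Hc' : M r k + M k j < M r j by [].
have Hm : forall a b, M a b <= sym_set M r k v a b.
  move=> a b; rewrite Nk; case: ifP => // /orP[]/andP[/eqP-> /eqP->];
  rewrite /v; [| rewrite Hs]; lra.
have Ns : forall a b, sym_set M r k v a b = sym_set M r k v b a.
  move=> a b; rewrite !Nk.
  have -> : ((b == r) && (a == k)) || ((b == k) && (a == r)) =
            ((a == r) && (b == k)) || ((a == k) && (b == r)).
    by rewrite orbC andbC [(b == r) && _]andbC.
  by case: ifP => //; rewrite Hs.
have Nd : forall a, sym_set M r k v a a = 0.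
  move=> a; rewrite Nk; case: ifP => [/orP[]/andP[/eqP E1 /eqP E2]|_].
  - by rewrite -E1 -E2 eqxx in rk.
  - by rewrite -E1 -E2 eqxx in rk.
  - exact: Hd.
split=> //.
- by move=> a b; apply: le_trans (HD a b) (Hm a b).
- move=> a b ak bk; rewrite Nk (negbTE ak) (negbTE bk) andbF /=; exact: Hoff.
- move=> i; rewrite Nk; case: (eqVneq i r) => [-> | ir].
    rewrite !eqxx /=; right; split=> //; exists j; split=> //.
    rewrite !Nk (negbTE Hjr') (negbTE jk) (negbTE rk) !eqxx /= /v (Hs j k).
    lra.
  rewrite kr andbF /=.
  case: (HW i) => [-> | [sti [j' [ji j'k ik Hle]]]]; [by left|right].
  split=> //; exists j'; split=> //.
  have j'r : j' != r.
    apply/eqP => E; have := Hord i sti ir; rewrite -E => H.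
    by have := ltn_trans ji H; rewrite ltnn.
  by rewrite !Nk (negbTE ir) (negbTE j'r) kr (negbTE ik) (negbTE j'k) /=.
- move=> a b /orP [Hab | /andP[/eqP-> /eqP->]].
    case: (eqVneq b k) => [-> | bk]; first by rewrite Nd addr0.
    case: (eqVneq a k) => [-> | ak]; first by rewrite Nd add0r Ns.
    rewrite {1}Nk (negbTE ak) (negbTE bk) andbF /=.
    apply: le_trans (HA _ _ Hab) _; apply: lerD; apply: Hm.
  rewrite !Nk !eqxx (negbTE jk) (negbTE rk) (negbTE Hjr') kr /= /v (Hs j k).
  lra.
Qed.

Lemma round k (s : iomr_state R n) : symz s.1 ->
  Inv k s.1 (foldl (fun s i => foldl (fun s j => iomr_tick k i j s) s
        [seq j <- enum 'I_n | (nat_of_ord j < nat_of_ord i)%N]) s (enum 'I_n)).1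
     predT (fun a b => (b < a)%N).
Proof.
case=> Ds Dd Dn.
set D := s.1.
set P := fun (p : seq 'I_n) (t : iomr_state R n) =>
  Inv k D t.1 (fun a => a \in p) (fun a b => (b < a)%N && (a \in p)).
suff : P (enum 'I_n) (foldl (fun s i => foldl (fun s j => iomr_tick k i j s) s
        [seq j <- enum 'I_n | (nat_of_ord j < nat_of_ord i)%N]) s (enum 'I_n)).
  by move=> H; apply: (Inv_weak H) => // a b ->; rewrite mem_enum.
apply: foldl_ind.
  split=> //; [by move=> i; left | by move=> i j; rewrite in_nil andbF].
move=> p r q t E Ht.
set l := [seq j <- enum 'I_n | (nat_of_ord j < nat_of_ord r)%N].
set P' := fun (p' : seq 'I_n) (t : iomr_state R n) =>
  Inv k D t.1 (fun a => (a \in p) || (a == r))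
    (fun a b => (b < a)%N && ((a \in p) || ((a == r) && (b \in p')))).
suff : P' l (foldl (fun s j => iomr_tick k r j s) t l).
  move=> H; apply: (Inv_weak H).
    by move=> a; rewrite mem_rcons in_cons orbC.
  move=> a b /andP[ba]; rewrite mem_rcons in_cons => /orP[/eqP ar|ap].
    by rewrite ba /= ar eqxx /= /l mem_filter mem_enum -ar ba orbT.
  by rewrite ba ap.
apply: foldl_ind.
  apply: (Inv_weak Ht) => [a ->//|a b /andP[-> /orP[->//|]]].
  by rewrite in_nil andbF.
move=> p' j q' t' E' Ht'.
have jr : (j < r)%N.
  have : j \in l by rewrite -E' mem_cat in_cons eqxx orbT.
  by rewrite mem_filter => /andP[].
have := step_inv Ht' _ _ jr.
move=> /(_ _) H; rewrite /P'.
apply: (Inv_weak (H _ _)).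
- by rewrite eqxx orbT.
- move=> i /orP[ip|/eqP ->]; last by rewrite eqxx.
  by move=> _; apply: (enum_prefix_lt E).
- by [].
- move=> a b /andP[ba /orP[ap|/andP[ar]]]; first by rewrite ba ap.
  rewrite mem_rcons in_cons => /orP[bj|bp']; first by rewrite ar bj orbT.
  by rewrite ba ar bp' orbT.
Qed.

Lemma final_props k (D M : 'M[R]_n) : Inv k D M predT (fun a b => (b < a)%N) ->
  symz D ->
  [/\ symz M, forall a b, D a b <= M a b, tri M k &
      forall m, m != k -> tri D m -> tri M m].
Proof.
case=> Hs Hd HD Hoff HW HA [Ds Dd Dn].
have Mn : forall a b, 0 <= M a b by move=> a b; apply: le_trans (Dn a b) (HD a b).
have A' : forall a b, M a b <= M a k + M b k.
  move=> a b; case: (ltngtP a b) => H.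
  - by have := HA b a H; rewrite (Hs b a) addrC.
  - exact: HA.
  - have -> : a = b by apply: val_inj.
    by rewrite Hd; apply: addr_ge0.
have Tk : tri M k by move=> i j; rewrite -(Hs j k); apply: A'.
split=> // m mk triD.
have B : forall i, i != k -> M i k <= M i m + M m k.
  move=> i ik; case: (HW i) => [E | [_ [j [ji jk _ Hle]]]].
    rewrite E (Hoff i m ik mk).
    have := triD i k; have := HD m k; lra.
  have h1 := Hoff i j ik jk; have h2 := triD i j.
  have h3 := Hoff i m ik mk; have h4 := Hoff m j mk jk; have h5 := A' m j.
  lra.
move=> i j.
case: (eqVneq i k) => [-> | ik]; case: (eqVneq j k) => [-> | jk].
- by rewrite Hd; apply: addr_ge0.
- have := B j jk; rewrite (Hs k j) (Hs k m) (Hs j m); lra.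
- exact: B.
- rewrite (Hoff i j ik jk) (Hoff i m ik mk) (Hoff m j mk jk); exact: triD.
Qed.

Lemma foldl_cost (T : Type) (f : iomr_state R n -> T -> iomr_state R n) b l s :
  (forall s x, ((f s x).2 <= s.2 + b)%N) ->
  ((foldl f s l).2 <= s.2 + size l * b)%N.
Proof.
elim: l s => [|x l IH] s Hf /=; first by rewrite addn0.
apply: leq_trans (IH _ Hf) _.
by rewrite mulSn addnA leq_add2r; apply: Hf.
Qed.

Lemma cost_bound (D' : 'M[R]_n) : (iomr_cost D' <= n * (n * n))%N.
Proof.
rewrite /iomr_cost /iomr_run.
have := @foldl_cost _ _ (n * n) (enum 'I_n) (D', 0%N).
rewrite size_enum_ord /= add0n; apply=> s k.
have := @foldl_cost _ _ n (enum 'I_n) s.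
rewrite size_enum_ord; apply=> s' i.
have := @foldl_cost _ (fun s j => iomr_tick k i j s) 1 
  [seq j <- enum 'I_n | (nat_of_ord j < nat_of_ord i)%N] s'.
move=> /(_ _) H; apply: leq_trans (H _) _.
  by move=> s'' x /=; rewrite addn1.
rewrite muln1 leq_add2l.
by rewrite -[X in (_ <= X)%N](size_enum_ord n) size_filter count_size.
Qed.

End Proof.

Theorem mainTheorem4 :
  (exists c : nat, forall (R : realFieldType) (n : nat) (D' : 'M[R]_n),
      (iomr_cost D' <= c * n ^ 3)%N) /\
  (forall (R : realFieldType) (n : nat) (D' : 'M[R]_n),
    sym_nonneg D' ->
    (forall i, D' i i = 0) ->
    mx_le 0 (iomr D') /\ is_metric (D' + iomr D')).
Proof.
split.
  exists 1%N => R n D'; rewrite mul1n.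
  have -> : (n ^ 3 = n * (n * n))%N by rewrite !expnS expn0 muln1.
  exact: cost_bound.
move=> R n D' [Ds Dn] Dd.
have HD : symz D' by [].
set P := fun (p : seq 'I_n) (t : iomr_state R n) =>
  [/\ symz t.1, forall a b, D' a b <= t.1 a b & forall m, m \in p -> tri t.1 m].
have : P (enum 'I_n) (iomr_run D').
  rewrite /iomr_run; apply: foldl_ind.
    by split=> // a b; rewrite lexx.
  move=> p k q t _ [Hsz Hle Htri].
  have [Msz MD Mk Mm] := final_props (round k Hsz) Hsz.
  split=> //.
    by move=> a b; apply: le_trans (Hle a b) (MD a b).
  move=> m; rewrite mem_rcons in_cons => /orP[/eqP -> //|mp].
  case: (eqVneq m k) => [-> //| mk].
  exact: Mm mk (Htri m mp).
case=> [[Ms Md Mn] MD Mt].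
have E : D' + iomr D' = (iomr_run D').1 by rewrite /iomr addrC subrK.
split.
  by move=> i j; rewrite /iomr !mxE subr_ge0.
rewrite E; split=> // i j k.
rewrite (Ms j k); apply: Mt; exact: mem_enum.
Qed.
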